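(* Let $\mathfrak m\in\mathcal O_{\mathbb Z}$ be a set (all multiplicities at most $1$). Then no non-trivial decomposition of $\mathfrak m$ is relevant to the canonical order on $\mathfrak m$. In particular, if $\mathfrak m$ is distinguished then $\mathfrak m$ is of Speh type.
   Context: Segments of integers: $[a,b]=\{a,\dots,b\}$ with integers $a\le b$; $b([a,b])=a$, $e([a,b])=b$, $\nu[a,b]=[a+1,b+1]$; $[a,b]\prec[a',b']$ if $a<a'$, $b<b'$, $b\ge a'-1$. $\mathcal O_{\mathbb Z}$: finite multi-sets of segments (functions to $\mathbb Z_{\ge0}$ with finite support; sums and pointwise minima are taken as functions; $\nu\mathfrak n$ applies $\nu$ to each segment). An ordering $\{\Delta_1,\dots,\Delta_k\}$ is standard if $\Delta_i\not\prec\Delta_j$ for $i<j$. A decomposition of $[a,b]$ is a tuple of nonempty segments $([a_1,b_1],\dots,[a_m,b_m])$ with $b_1=b$, $a_m=a$, $b_{i+1}=a_i-1$; it is trivial if $m=1$. A decomposition of an ordered multi-set $\{\Delta_1,\dots,\Delta_k\}$ is a choice of decomposition $(\Delta_{i,1},\dots,\Delta_{i,k_i})$ of each $\Delta_i$ (trivial if all are trivial); index set $\mathfrak I=\{(i,j)\}$ with lexicographic order $\prec$, and $(i,j)\ll(i',j')$ iff $i<i'$. It is relevant to the ordering if there is an involution $\tau$ of $\mathfrak I$ with: $\tau(i,j+1)\ll\tau(i,j)$ for all $i$, $1\le j<k_i$; $\tau(\iota)\ne\iota$ for all $\iota$; $\Delta_\iota=\nu\Delta_{\tau(\iota)}$ whenever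 $\iota\prec\tau(\iota)$. $\mathfrak m$ is distinguished if every standard ordering admits a relevant decomposition; of Speh type if $\mathfrak m=\mathfrak n+\nu\mathfrak n$ for some $\mathfrak n$. Canonical order: let $c_1>\cdots>c_s$ be the distinct values of $e(\Delta)$, $\Delta\in\mathfrak m$, and $\mathfrak m[i]$ the sub-multi-set of segments ending at $c_i$. List all of $\mathfrak m[1]$, then all of $\mathfrak m[2]$, etc. Order $\mathfrak m[1]$ by nondecreasing beginnings and set $\mathfrak m[1]'=\mathfrak m[1]$. Given $\mathfrak m[i]'$, let $\mathfrak p=\min(\mathfrak m[i+1],\nu^{-1}\mathfrak m[i]')$ and $\mathfrak m[i+1]'=\mathfrak m[i+1]-\mathfrak p$; order $\mathfrak m[i+1]$ as the segments of $\mathfrak m[i+1]'$ in nondecreasing order of beginnings followed by the segments of $\mathfrak p$ in nonincreasing order of beginnings. (This is a standard order.) *)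

(* Defs.v *)
From HB Require Import structures.
From mathcomp Require Import all_boot all_order all_algebra.
Set Implicit Arguments. Unset Strict Implicit. Unset Printing Implicit Defensive.
Import Order.TTheory GRing.Theory Num.Theory.
Local Open Scope ring_scope.

(* A segment [a,b] is represented by the pair (a, b) : int * int, with a <= b. *)
Definition seg := (int * int)%type.
Definition bseg (d : seg) : int := d.1.
Definition eseg (d : seg) : int := d.2.
Definition wf_seg (d : seg) : bool := bseg d <= eseg d.
Definition nu (d : seg) : seg := (bseg d + 1, eseg d + 1).
Definition nuinv (d : seg) : seg := (bseg d - 1, eseg d - 1).

Definition prec (d d' : seg) : bool :=
  [&& bseg d < bseg d', eseg d < eseg d' & bseg d' - 1 <= eseg d].

(* Finite multisets of segments: sequences of well-formed segments, considered
   up to permutation (multiplicity of x = count_mem x). *)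
Definition mset_ok (m : seq seg) : bool := all wf_seg m.

Definition mmin (A B : seq seg) : seq seg :=
  flatten [seq nseq (minn (count_mem x A) (count_mem x B)) x | x <- undup A].
Definition mdiff (A B : seq seg) : seq seg :=
  flatten [seq nseq (count_mem x A - count_mem x B)%N x | x <- undup A].

Definition standard (s : seq seg) : Prop :=
  forall i j, (i < j < size s)%N -> ~~ prec (nth (0,0) s i) (nth (0,0) s j).

Definition ends (m : seq seg) : seq int :=
  sort (fun x y : int => y <= x) (undup (map eseg m)).
Definition part (m : seq seg) (c : int) : seq seg := filter (fun d => eseg d == c) m.
Definition sort_inc (s : seq seg) := sort (fun d d' : seg => bseg d <= bseg d') s.
Definition sort_dec (s : seq seg) := sort (fun d d' : seg => bseg d' <= bseg d) s.

Fixpoint canon_aux (prev' : seq seg) (cs : seq int) (m : seq seg) : seq seg :=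
  match cs with
  | [::] => [::]
  | c :: cs' =>
      let mi := part m c in
      let p := mmin mi (map nuinv prev') in
      let mi' := mdiff mi p in
      sort_inc mi' ++ sort_dec p ++ canon_aux mi' cs' m
  end.
(* m[1]' = m[1] since prev' = [::] gives p = 0 *)
Definition canon (m : seq seg) : seq seg := canon_aux [::] (ends m) m.

Definition seg_decomp (d : seg) (ds : seq seg) : Prop :=
  [/\ ds <> [::], all wf_seg ds,
      eseg (head d ds) = eseg d, bseg (last d ds) = bseg d &
      forall i, (i.+1 < size ds)%N ->
        eseg (nth d ds i.+1) = bseg (nth d ds i) - 1].

(* decomposition D of the ordered multiset s = (Delta_1,...,Delta_k):
   D_i is a decomposition of Delta_i (indices are 0-based). *)
Definition decomp (s : seq seg) (D : seq (seq seg)) : Prop :=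
  size D = size s /\
  forall i, (i < size s)%N -> seg_decomp (nth (0,0) s i) (nth [::] D i).

Definition trivial_decomp (D : seq (seq seg)) : Prop :=
  forall i, (i < size D)%N -> size (nth [::] D i) = 1%N.

Definition inI (D : seq (seq seg)) (x : nat * nat) : bool :=
  (x.1 < size D)%N && (x.2 < size (nth [::] D x.1))%N.
Definition Dseg (D : seq (seq seg)) (x : nat * nat) : seg :=
  nth (0,0) (nth [::] D x.1) x.2.
Definition lexlt (x y : nat * nat) : bool :=
  (x.1 < y.1)%N || ((x.1 == y.1) && (x.2 < y.2)%N).

Definition relevant (D : seq (seq seg)) : Prop :=
  exists tau : nat * nat -> nat * nat,
    [/\ forall x, inI D x -> inI D (tau x) /\ tau (tau x) = x,
        forall i j, inI D (i, j.+1) -> ((tau (i, j.+1)).1 < (tau (i, j)).1)%N,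
        forall x, inI D x -> tau x <> x &
        forall x, inI D x -> lexlt x (tau x) -> Dseg D x = nu (Dseg D (tau x))].

Definition distinguished (m : seq seg) : Prop :=
  forall s, perm_eq s m -> standard s ->
    exists D, decomp s D /\ relevant D.

Definition speh_type (m : seq seg) : Prop :=
  exists n : seq seg, mset_ok n /\ perm_eq m (n ++ map nu n).

(* Main.v *)
Require Import Defs.
From HB Require Import structures.
From mathcomp Require Import all_boot all_order all_algebra zify.
Set Implicit Arguments. Unset Strict Implicit. Unset Printing Implicit Defensive.
Import Order.TTheory GRing.Theory Num.Theory.
Local Open Scope ring_scope.

Lemma nuK d : nuinv (nu d) = d.
Proof. by case: d => a b; rewrite /nu /nuinv /bseg /eseg /= !addrK. Qed.
Lemma nuinvK d : nu (nuinv d) = d.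
Proof. by case: d => a b; rewrite /nu /nuinv /bseg /eseg /= !subrK. Qed.
Lemma nu_inj : injective nu.
Proof. exact: can_inj nuK. Qed.
Lemma nuinv_inj : injective nuinv.
Proof. exact: can_inj nuinvK. Qed.
Lemma seg_eq (d d' : seg) : bseg d = bseg d' -> eseg d = eseg d' -> d = d'.
Proof. by case: d => a b; case: d' => a' b' /= -> ->. Qed.

Lemma mem_map_nuinv x s : (x \in map nuinv s) = (nu x \in s).
Proof. by rewrite -{1}(nuK x) (mem_map nuinv_inj). Qed.

Lemma count_flat (f : seg -> nat) (s : seq seg) y : uniq s ->
  count_mem y (flatten [seq nseq (f x) x | x <- s]) = if y \in s then f y else 0%N.
Proof.
elim: s => //= x s IH /andP[xs us]; rewrite count_cat count_nseq IH // in_cons.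
case: (eqVneq y x) => [->|ne] /=; first by rewrite (negPf xs) eqxx mul1n addn0.
by rewrite eq_sym (negPf ne) mul0n.
Qed.

Lemma count_mmin A B y : count_mem y (mmin A B) = minn (count_mem y A) (count_mem y B).
Proof.
rewrite /mmin count_flat ?undup_uniq // mem_undup.
case: ifP => // /negbT yA; by rewrite (count_memPn yA) min0n.
Qed.

Lemma count_mdiff A B y : count_mem y (mdiff A B) = (count_mem y A - count_mem y B)%N.
Proof.
rewrite /mdiff count_flat ?undup_uniq // mem_undup.
case: ifP => // /negbT yA; by rewrite (count_memPn yA).
Qed.

Lemma mem_count (s : seq seg) y : (y \in s) = (0 < count_mem y s)%N.
Proof. by rewrite -has_pred1 has_count. Qed.

Lemma mem_mmin A B y : (y \in mmin A B) = (y \in A) && (y \in B).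
Proof. by rewrite !mem_count count_mmin leq_min. Qed.

Lemma mem_mdiff_uniq A B y : uniq A -> (y \in mdiff A B) = (y \in A) && (y \notin B).
Proof.
move=> uA; rewrite mem_count count_mdiff (count_uniq_mem _ uA).
rewrite (mem_count B y); case: (y \in A) => /=; last by [].
by case: (count_mem y B).
Qed.

Lemma uniq_mdiff A B : uniq A -> uniq (mdiff A B).
Proof.
move=> uA; apply: count_mem_uniq => x.
rewrite (mem_mdiff_uniq _ _ uA) count_mdiff (count_uniq_mem _ uA).
case: (x \in A) => /=; last by [].
rewrite (mem_count B x); case: (count_mem x B) => //.
Qed.


Lemma count_filter_mem (a : pred seg) s y :
  count_mem y (filter a s) = if a y then count_mem y s else 0%N.
Proof.
elim: s => [|x s IH] /=; first by case: ifP.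
case: ifP => ax /=; rewrite IH; case: (eqVneq x y) => [<-|ne] //=; by rewrite ax.
Qed.

Lemma pairwise_combine (T : eqType) (r1 r2 r3 : rel T) (s : seq T) :
  pairwise r1 s -> pairwise r2 s ->
  {in s &, forall a b, r1 a b -> r2 a b -> r3 a b} -> pairwise r3 s.
Proof.
elim: s => //= x s IH /andP[a1 p1] /andP[a2 p2] H.
apply/andP; split.
  apply/allP=> y ys; apply: H; rewrite ?in_cons ?eqxx ?ys ?orbT //.
    exact: (allP a1). exact: (allP a2).
apply: IH => // a b sa sb; apply: H; by rewrite in_cons ?sa ?sb orbT.
Qed.

Lemma my_eq_in_pairwise (T : eqType) (r1 r2 : rel T) (s : seq T) :
  {in s &, forall a b, r1 a b = r2 a b} -> pairwise r1 s = pairwise r2 s.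
Proof.
elim: s => //= x s IH H; rewrite IH; last first.
  by move=> a b sa sb; apply: H; rewrite in_cons ?sa ?sb orbT.
congr (_ && _); apply: eq_in_all => y ys; apply: H; by rewrite in_cons ?eqxx ?ys ?orbT.
Qed.

Lemma uniq_mmin A B : uniq A -> uniq (mmin A B).
Proof.
move=> uA; apply: count_mem_uniq => x.
rewrite mem_mmin count_mmin (count_uniq_mem _ uA).
case: (x \in A) => /=; first rewrite (mem_count B x).
  by case: (count _ _) => [|[|n]].
by rewrite min0n.
Qed.

Fixpoint psets (prev : seq seg) (cs : seq int) (m : seq seg) : seq seg :=
  match cs with
  | [::] => [::]
  | c :: cs' =>
      let mi := part m c in
      let p := mmin mi (map nuinv prev) in
      let mi' := mdiff mi p in
      p ++ psets mi' cs' m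
  end.

Definition Rel (P : pred seg) (d d' : seg) : bool :=
  (eseg d' <= eseg d) &&
  ((eseg d == eseg d') ==>
     (if P d then P d' && (bseg d' < bseg d) else P d' || (bseg d < bseg d'))).

Lemma canon_aux_cons prev c cs m :
  canon_aux prev (c :: cs) m =
  sort_inc (mdiff (part m c) (mmin (part m c) (map nuinv prev))) ++
  sort_dec (mmin (part m c) (map nuinv prev)) ++
  canon_aux (mdiff (part m c) (mmin (part m c) (map nuinv prev))) cs m.
Proof. by []. Qed.

Lemma psets_cons prev c cs m :
  psets prev (c :: cs) m =
  mmin (part m c) (map nuinv prev) ++
  psets (mdiff (part m c) (mmin (part m c) (map nuinv prev))) cs m.
Proof. by []. Qed.

Lemma mem_part m c x : (x \in part m c) = (x \in m) && (eseg x == c).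
Proof. by rewrite /part mem_filter andbC. Qed.

Section Canon.
Variable m : seq seg.
Hypothesis um : uniq m.

Lemma uniq_part c : uniq (part m c).
Proof. exact: filter_uniq. Qed.

Lemma mem_p prev c x :
  (x \in mmin (part m c) (map nuinv prev)) = (x \in part m c) && (nu x \in prev).
Proof. by rewrite mem_mmin mem_map_nuinv. Qed.

Lemma mem_mi' prev c x :
  (x \in mdiff (part m c) (mmin (part m c) (map nuinv prev))) =
  (x \in part m c) && (nu x \notin prev).
Proof.
rewrite (mem_mdiff_uniq _ _ (uniq_part c)) mem_p.
by case: (x \in part m c).
Qed.

Lemma canon_count prev cs y : uniq cs ->
  count_mem y (canon_aux prev cs m) = count_mem y (filter (fun d => eseg d \in cs) m).
Proof.
elim: cs prev => [|c cs IH] prev /=.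
  by move=> _; rewrite filter_pred0.
move=> /andP[ccs ucs].
rewrite !count_cat !count_sort IH // count_mdiff count_mmin addnA subnK ?geq_minl //.
rewrite /part !count_filter_mem in_cons.
case: (eqVneq (eseg y) c) => [->|ne] /=; first by rewrite (negPf ccs) addn0.
by [].
Qed.

Lemma psets_sub prev cs d : d \in psets prev cs m -> (d \in m) && (eseg d \in cs).
Proof.
elim: cs prev => [|c cs IH] prev //=.
rewrite mem_cat => /orP[|/IH /andP[-> h]]; last by rewrite in_cons h orbT.
by rewrite mem_p mem_part => /andP[/andP[-> /eqP ->]]; rewrite in_cons eqxx.
Qed.

Lemma psets_prop prev cs :
  pairwise (fun x y => y < x) cs ->
  (forall x c, x \in prev -> c \in cs -> c < eseg x) ->
  forall d, d \in m -> eseg d \in cs ->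
  (d \in psets prev cs m) =
  (nu d \in prev) || [&& nu d \in m, eseg (nu d) \in cs & nu d \notin psets prev cs m].
Proof.
elim: cs prev => [|c cs IH] prev //.
rewrite pairwise_cons => /andP[/allP acs pcs] Hprev d dm.
have enu : forall x, eseg (nu x) = eseg x + 1 by [].
have c1 : c + 1 \notin c :: cs.
  rewrite in_cons negb_or; apply/andP; split.
    by apply/negP=> /eqP; lia.
  apply/negP=> /acs; rewrite ltNge => /negP; apply; by rewrite lerDl.
set mi' := mdiff (part m c) (mmin (part m c) (map nuinv prev)).
rewrite in_cons => /orP[/eqP dc|dcs].
- have dnot : d \notin psets mi' cs m.
    apply/negP=> /psets_sub /andP[_]; rewrite dc => /acs; by rewrite ltxx.
  rewrite psets_cons mem_cat -/mi' (negPf dnot) orbF mem_p mem_part dm dc eqxx /=.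
  by rewrite dc (negPf c1) /= andbF orbF.
- have dnotp : d \notin mmin (part m c) (map nuinv prev).
    rewrite mem_p mem_part; apply/negP=> /andP[/andP[_ /eqP dc] _].
    by move: (acs _ dcs); rewrite dc ltxx.
  rewrite psets_cons mem_cat -/mi' (negPf dnotp) /=.
  rewrite (IH _ pcs _ _ dm dcs); last first.
    move=> x c' xp c'cs; rewrite mem_mi' mem_part in xp.
    by move: xp => /andP[/andP[_ /eqP ->] _]; apply: acs.
  have ndprev : nu d \notin prev.
    apply/negP=> /Hprev H.
    have := H c; rewrite in_cons eqxx => /(_ isT).
    rewrite enu => h1; have h2 := acs _ dcs.
    move: h1 h2; lia.
  rewrite (negPf ndprev) /= mem_mi' mem_part !enu.
  case ndm : (nu d \in m) => //=.
  rewrite mem_cat negb_or mem_p mem_part ndm /= in_cons.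
  case: (eqVneq (eseg d + 1) c) => [ec|nec] /=.
  + have npd : nu d \notin psets mi' cs m.
      apply/negP=> /psets_sub /andP[_]; rewrite enu ec => /acs; by rewrite ltxx.
    have ccs : (c \in cs) = false.
      by apply/negP=> /acs; rewrite ltxx.
    rewrite ec ccs npd /=. by case: (nu (nu d) \in prev).
  + by [].
Qed.

Lemma canon_mem prev cs x : x \in canon_aux prev cs m -> (x \in m) && (eseg x \in cs).
Proof.
elim: cs prev => [|c cs IH] prev //.
rewrite canon_aux_cons !mem_cat !mem_sort => /orP[|/orP[]].
- rewrite mem_mi' mem_part => /andP[/andP[-> /eqP ->] _]; by rewrite in_cons eqxx.
- rewrite mem_p mem_part => /andP[/andP[-> /eqP ->] _]; by rewrite in_cons eqxx.
- by move/IH=> /andP[-> h]; rewrite in_cons h orbT.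
Qed.

Lemma sorted_inc_pw s : pairwise (fun d d' : seg => bseg d <= bseg d') (sort_inc s).
Proof.
rewrite -sorted_pairwise; last by move=> a b c; apply: le_trans.
apply: sort_sorted => a b; exact: le_total.
Qed.

Lemma sorted_dec_pw s : pairwise (fun d d' : seg => bseg d' <= bseg d) (sort_dec s).
Proof.
rewrite -sorted_pairwise; last by move=> a b c h1 h2; apply: le_trans h2 h1.
apply: sort_sorted => a b; exact: le_total.
Qed.

Lemma canon_pairwise prev cs (P : pred seg) :
  pairwise (fun x y => y < x) cs ->
  (forall d, d \in m -> eseg d \in cs -> P d = (d \in psets prev cs m)) ->
  pairwise (Rel P) (canon_aux prev cs m).
Proof.
elim: cs prev => [|c cs IH] prev //.
rewrite pairwise_cons => /andP[/allP acs pcs] HP.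
set p := mmin (part m c) (map nuinv prev).
set mi' := mdiff (part m c) p.
have inA : forall x, x \in sort_inc mi' -> [/\ x \in m, eseg x = c & P x = false].
  move=> x; rewrite mem_sort /mi' /p mem_mi' mem_part => /andP[/andP[xm /eqP xc] nx].
  split=> //; rewrite HP ?xm ?xc ?in_cons ?eqxx // psets_cons mem_cat mem_p mem_part.
  rewrite (negPf nx) andbF /=; apply/negP=> /psets_sub /andP[_]; rewrite xc => /acs.
  by rewrite ltxx.
have inB : forall x, x \in sort_dec p -> [/\ x \in m, eseg x = c & P x = true].
  move=> x; rewrite mem_sort /p mem_p mem_part => /andP[/andP[xm /eqP xc] nx].
  split=> //; rewrite HP ?xm ?xc ?in_cons ?eqxx // psets_cons mem_cat mem_p mem_part.
  by rewrite xm xc eqxx nx.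
have inC : forall x, x \in canon_aux mi' cs m -> (x \in m) /\ eseg x < c.
  by move=> x /canon_mem /andP[xm /acs xc].
have uA : uniq (sort_inc mi') by rewrite sort_uniq; apply: uniq_mdiff; apply: uniq_part.
have uB : uniq (sort_dec p) by rewrite sort_uniq; apply: uniq_mmin; apply: uniq_part.
rewrite canon_aux_cons pairwise_cat pairwise_cat; apply/and3P; split.
- apply/allrelP=> a b aA; rewrite mem_cat => /orP[bB|bC].
    have [_ ea Pa] := inA _ aA; have [_ eb Pb] := inB _ bB.
    by rewrite /Rel ea eb lexx eqxx Pa Pb.
  have [_ ea Pa] := inA _ aA; have [_ eb] := inC _ bC.
  by rewrite /Rel ea (ltW eb) eq_sym (lt_eqF eb).
- apply: (pairwise_combine (sorted_inc_pw mi')).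
    by move: uA; rewrite uniq_pairwise; apply.
  move=> a b aA bA /= hab nab; have [_ ea Pa] := inA _ aA; have [_ eb Pb] := inA _ bA.
  rewrite /Rel ea eb lexx eqxx Pa Pb /= lt_neqAle hab andbT.
  apply/negP=> /eqP hb; move/eqP: nab; apply; apply: seg_eq => //; by rewrite ea eb.
- apply/and3P; split.
  + apply/allrelP=> a b aB bC; have [_ ea Pa] := inB _ aB; have [_ eb] := inC _ bC.
    by rewrite /Rel ea (ltW eb) eq_sym (lt_eqF eb).
  + apply: (pairwise_combine (sorted_dec_pw p)).
      by move: uB; rewrite uniq_pairwise; apply.
    move=> a b aA bA /= hab nab; have [_ ea Pa] := inB _ aA; have [_ eb Pb] := inB _ bA.
    rewrite /Rel ea eb lexx eqxx Pa Pb /= lt_neqAle hab andbT.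
    apply/negP=> /eqP hb; move/eqP: nab; apply; apply: seg_eq => //; by rewrite ea eb.
  + apply: IH => // d dm dcs; rewrite HP ?in_cons ?dcs ?orbT // psets_cons mem_cat.
    rewrite mem_p mem_part dm /=; have := acs _ dcs => h.
    by rewrite (lt_eqF h).
Qed.
End Canon.

Definition Psi (s : seq seg) : Prop :=
  [/\ uniq s, all wf_seg s &
      exists P : pred seg,
        (forall d, d \in s -> P d = (nu d \in s) && ~~ P (nu d)) /\ pairwise (Rel P) s].

Lemma mem_ends m c : (c \in ends m) = (c \in map eseg m).
Proof. by rewrite /ends mem_sort mem_undup. Qed.

Lemma ends_pw m : pairwise (fun x y : int => y < x) (ends m).
Proof.
apply: (pairwise_combine (r1 := fun x y : int => y <= x) (r2 := fun x y : int => x != y)).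
- rewrite -sorted_pairwise; last by move=> a b c h1 h2; apply: le_trans h2 h1.
  apply: sort_sorted => a b; exact: le_total.
- have : uniq (ends m) by rewrite /ends sort_uniq undup_uniq.
  by rewrite uniq_pairwise.
- by move=> a b _ _ /= h1 h2; rewrite lt_neqAle eq_sym h2 h1.
Qed.

Lemma canon_count_m m y : uniq m -> count_mem y (canon m) = count_mem y m.
Proof.
move=> um; rewrite /canon canon_count //; last by rewrite /ends sort_uniq undup_uniq.
rewrite count_filter_mem mem_ends; case: ifP => // /negbT h.
apply/esym/count_memPn; apply: contra h => ym; exact: map_f.
Qed.

Lemma canon_perm m : uniq m -> perm_eq (canon m) m.
Proof.
move=> um.
have mc : canon m =i m by move=> x; rewrite !mem_count canon_count_m.
apply: uniq_perm => //.
apply: count_mem_uniq => x; by rewrite canon_count_m // (count_uniq_mem _ um) mc.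
Qed.

Lemma canon_Psi m : mset_ok m -> uniq m -> Psi (canon m).
Proof.
move=> wm um; have pm := canon_perm um.
have mc : canon m =i m by apply: perm_mem.
split; first by rewrite (perm_uniq pm).
  by rewrite (perm_all _ pm).
exists (fun d => d \in psets [::] (ends m) m); split.
  move=> d; rewrite mc => dm.
  rewrite (psets_prop um (ends_pw m)) //; last by rewrite mem_ends (map_f eseg dm).
  rewrite mc /=; case ndm : (nu d \in m) => //=.
  by rewrite mem_ends (map_f eseg ndm).
apply: canon_pairwise => //; exact: ends_pw.
Qed.

Section SegDecomp.
Variables (d : seg) (ds : seq seg).
Hypothesis H : seg_decomp d ds.
Local Notation P j := (nth (0,0) ds j).

Lemma sd_size : (0 < size ds)%N.
Proof. by case: H; case: ds. Qed.

Lemma sd_nth j : (j < size ds)%N -> nth d ds j = P j.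
Proof. by move=> h; apply: set_nth_default. Qed.

Lemma sd_wf j : (j < size ds)%N -> bseg (P j) <= eseg (P j).
Proof. by case: H => _ /allP aw _ _ _ h; apply: aw; apply: mem_nth. Qed.

Lemma sd_cons j : (j.+1 < size ds)%N -> eseg (P j.+1) = bseg (P j) - 1.
Proof.
case: H => _ _ _ _ hc h; rewrite -!sd_nth //; last exact: ltnW.
exact: hc.
Qed.

Lemma sd_lt j j' : (j < j')%N -> (j' < size ds)%N -> eseg (P j') < bseg (P j).
Proof.
move=> jj'; rewrite -(subnKC jj'); move: (j' - j.+1)%N => k.
elim: k => [|k IH] h.
  rewrite addn0 sd_cons //; lia.
have h' : (j.+1 + k < size ds)%N by rewrite addnS in h; exact: ltnW.
rewrite addnS sd_cons; last by rewrite -addnS.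
have := IH h'; have := sd_wf h'; lia.
Qed.

Lemma sd_first : eseg (P 0) = eseg d.
Proof. by case: H => _ _ h _ _; rewrite -sd_nth ?sd_size // nth0. Qed.

Lemma sd_last : bseg (P (size ds).-1) = bseg d.
Proof.
case: H => _ _ _ h _; rewrite -sd_nth ?nth_last //.
by rewrite prednK // sd_size.
Qed.

Lemma sd_eup j : (0 < j)%N -> (j < size ds)%N -> eseg (P j) < eseg d.
Proof.
move=> j0 h; have := sd_lt j0 h; have := sd_wf (ltn_trans j0 h); rewrite sd_first; lia.
Qed.

Lemma sd_ebound j : (j < size ds)%N -> eseg (P j) <= eseg d.
Proof.
case: j => [|j] h; first by rewrite sd_first.
exact: ltW (sd_eup _ h).
Qed.

Lemma sd_bbound j : (j < size ds)%N -> bseg d <= bseg (P j).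
Proof.
move=> h; rewrite -sd_last.
have : (j <= (size ds).-1)%N by rewrite -ltnS prednK // sd_size.
rewrite leq_eqVlt => /orP[/eqP -> //|lt].
have h2 : ((size ds).-1 < size ds)%N by rewrite prednK // sd_size.
have := sd_lt lt h2; have := sd_wf h2; lia.
Qed.

Lemma sd_single : size ds = 1%N -> P 0 = d.
Proof.
move=> s1; apply: seg_eq; last exact: sd_first.
by have := sd_last; rewrite s1.
Qed.
End SegDecomp.

Section Relev.
Variables (s : seq seg) (D : seq (seq seg)) (t : nat * nat -> nat * nat).
Hypothesis Hd : decomp s D.
Hypothesis Ht1 : forall x, inI D x -> inI D (t x) /\ t (t x) = x.
Hypothesis Ht2 : forall i j, inI D (i, j.+1) -> ((t (i, j.+1)).1 < (t (i, j)).1)%N.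
Hypothesis Ht3 : forall x, inI D x -> t x <> x.
Hypothesis Ht4 : forall x, inI D x -> lexlt x (t x) -> Dseg D x = nu (Dseg D (t x)).

Lemma rowD i : (i < size D)%N -> seg_decomp (nth (0,0) s i) (nth [::] D i).
Proof. by case: Hd => sz h hi; apply: h; rewrite -sz. Qed.

Lemma inI_row i j : inI D (i, j) -> (i < size D)%N /\ (j < size (nth [::] D i))%N.
Proof. by case/andP. Qed.

Lemma E_chain i j j' : (j < j')%N -> inI D (i, j') -> ((t (i, j')).1 < (t (i, j)).1)%N.
Proof.
move=> jj'; rewrite -(subnKC jj'); move: (j' - j.+1)%N => k.
elim: k => [|k IH] h; first by rewrite addn0 in h *; apply: Ht2.
have h' : inI D (i, (j.+1 + k)%N).
  move: h; rewrite /inI /= => /andP[-> h]; rewrite addnS in h; exact: ltnW.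
apply: ltn_trans (IH h'); rewrite addnS; apply: Ht2; by rewrite -addnS.
Qed.

Lemma E_last x : inI D x -> (t x).1 = 0%N -> x.2 = (size (nth [::] D x.1)).-1.
Proof.
case: x => i j /= h t0.
have [iD jr] := inI_row h.
case: (ltnP j.+1 (size (nth [::] D i))) => [lt|ge].
  have := Ht2 (i:=i) (j:=j); rewrite /inI /= iD lt t0 => /(_ isT).
  by [].
move: jr ge; lia.
Qed.

Lemma E_samerow_aux x : inI D x -> (t x).1 = x.1 -> (x.2 < (t x).2)%N -> False.
Proof.
case: x => i j /= h e lt.
have [iD jr] := inI_row h.
have [ht htt] := Ht1 h.
case E : (t (i, j)) => [i' j']; rewrite E /= in e lt; subst i'.
rewrite E in ht htt.
have lx : lexlt (i, j) (t (i, j)) by rewrite E /lexlt /= eqxx lt orbT.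
have eq := Ht4 h lx; rewrite E in eq.
have [_ j'r] := inI_row ht.
have rd := rowD iD.
case: (eqVneq j' j.+1) => [ej|nej].
  subst j'.
  have := Ht2 (i:=i) (j:=j) ht; by rewrite htt E ltnn.
have lt2 : (j.+1 < j')%N by rewrite ltn_neqAle eq_sym nej lt.
have a1 := sd_lt rd lt2 j'r.
have a2 := sd_cons rd (ltn_trans lt2 j'r).
have a3 := sd_wf rd (ltn_trans lt2 j'r).
have a4 := sd_wf rd j'r.
move: eq; rewrite /Dseg /= => eq.
have b1 : bseg (nth (0,0) (nth [::] D i) j) = bseg (nth (0,0) (nth [::] D i) j') + 1 by rewrite eq.
move: a1 a2 a3 a4 b1; lia.
Qed.

Lemma E_samerow x : inI D x -> (t x).1 <> x.1.
Proof.
move=> h e.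
have [ht htt] := Ht1 h.
have ne : x.2 <> (t x).2.
  move=> e2; apply: (Ht3 h); case: (t x) e e2 => a b; case: x {h ht htt} => a' b' /= -> ->.
  by [].
case: (ltngtP x.2 (t x).2) => [lt|gt|eq2]; last by [].
  exact: E_samerow_aux h e lt.
apply: (E_samerow_aux ht); by rewrite htt.
Qed.
End Relev.

Ltac clia := repeat match goal with H : _ |- _ => clear H end; lia.

Lemma bnu d : bseg (nu d) = bseg d + 1. Proof. by []. Qed.
Lemma enu d : eseg (nu d) = eseg d + 1. Proof. by []. Qed.
Lemma bnuinv d : bseg (nuinv d) = bseg d - 1. Proof. by []. Qed.
Lemma enuinv d : eseg (nuinv d) = eseg d - 1. Proof. by []. Qed.

Lemma first_row d0 s1 D (t : nat * nat -> nat * nat) :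
  Psi (d0 :: s1) -> decomp (d0 :: s1) D ->
  (forall x, inI D x -> inI D (t x) /\ t (t x) = x) ->
  (forall i j, inI D (i, j.+1) -> ((t (i, j.+1)).1 < (t (i, j)).1)%N) ->
  (forall x, inI D x -> t x <> x) ->
  (forall x, inI D x -> lexlt x (t x) -> Dseg D x = nu (Dseg D (t x))) ->
  size (nth [::] D 0) = 1%N /\
  exists q, [/\ (0 < q < size (d0 :: s1))%N, nth (0,0) (d0 :: s1) q = nuinv d0,
               size (nth [::] D q) = 1%N, t (0,0)%N = (q, 0%N) & t (q, 0%N) = (0,0)%N].
Proof.
set s := d0 :: s1 => [[us ws [P [HT Hpw]]]] Hd Ht1 Ht2 Ht3 Ht4.
have szD : size D = size s by case: Hd.
have pw : forall i j, (i < j)%N -> (j < size s)%N -> Rel P (nth (0,0) s i) (nth (0,0) s j).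
  move=> i j ij js; move/(pairwiseP (0,0)): Hpw; apply => //; exact: ltn_trans js.
set e0 := eseg d0; set b0 := bseg d0.
have maxe : forall i, (i < size s)%N -> eseg (nth (0,0) s i) <= e0.
  case=> [|i] h; first by rewrite lexx.
  by have /andP[] := pw 0%N i.+1 isT h.
have nonu : forall d, d \in s -> nu d \in s -> eseg d < e0.
  move=> d _ nd; have := maxe (index (nu d) s) ltac:(by rewrite index_mem).
  rewrite (nth_index _ nd) enu; clia.
have Pd0 : P d0 = false.
  rewrite HT ?mem_head //; case nd : (nu d0 \in s) => //=.
  by have := nonu _ (mem_head _ _) nd; rewrite /e0 ltxx.
have samebeg : forall i, (0 < i)%N -> (i < size s)%N -> eseg (nth (0,0) s i) = e0 ->
                 b0 < bseg (nth (0,0) s i).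
  move=> i i0 iS ei; have := pw _ _ i0 iS; rewrite /Rel ei eqxx Pd0 lexx /=.
  rewrite HT ?mem_nth //; case nd : (nu _ \in s) => //= _.
  by have := nonu _ (mem_nth _ iS) nd; rewrite ei ltxx.
have s0 : (0 < size s)%N by [].
have rd0 := rowD Hd (i:=0%N) ltac:(by rewrite szD).
have k0 := sd_size rd0.
set k := size (nth [::] D 0).
have Ix0 : inI D (0,0)%N by rewrite /inI /= szD s0 k0.
have [Iy tty] := Ht1 _ Ix0.
set y := t (0,0)%N in Iy tty *.
have y1 : y.1 <> 0%N by move=> h; apply: (E_samerow Hd Ht1 Ht2 Ht3 Ht4 Ix0).
have lx0 : lexlt (0,0)%N y by rewrite /lexlt /=; case: (y.1) y1.
have eq0 := Ht4 _ Ix0 lx0; rewrite -/y in eq0.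
have [yD yr] : (y.1 < size D)%N /\ (y.2 < size (nth [::] D y.1))%N by case/andP: Iy.
have lasty : y.2 = (size (nth [::] D y.1)).-1 by apply: (E_last Ht2 Iy); rewrite tty.
have rdy := rowD Hd yD.
have by_ : bseg (Dseg D y) = bseg (nth (0,0) s y.1).
  by rewrite /Dseg lasty (sd_last rdy).
have ey_ : eseg (Dseg D y) <= eseg (nth (0,0) s y.1) by apply: (sd_ebound rdy yr).
have ex0 : eseg (Dseg D (0,0)%N) = e0 by rewrite /Dseg /= (sd_first rd0).
have ys : (y.1 < size s)%N by rewrite -szD.
have y1pos : (0 < y.1)%N by case: (y.1) y1.
case: (ltnP 1 k) => [k2|k1].
-
  exfalso.
  set xk := (0, k.-1)%N.
  have kr : (k.-1 < k)%N by rewrite prednK.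
  have Ixk : inI D xk by rewrite /inI /= szD s0 kr.
  have ch := E_chain Ht2 (i:=0%N) (j:=0%N) (j':=k.-1) ltac:(by rewrite -ltnS prednK) Ixk.
  rewrite -/y in ch.
  have [Iyk ttyk] := Ht1 _ Ixk.
  set yk := t xk in Iyk ttyk ch *.
  have yk1 : yk.1 <> 0%N by move=> h; apply: (E_samerow Hd Ht1 Ht2 Ht3 Ht4 Ixk).
  have lxk : lexlt xk yk by rewrite /lexlt /=; case: (yk.1) yk1.
  have eqk := Ht4 _ Ixk lxk; rewrite -/yk in eqk.
  have [ykD ykr] : (yk.1 < size D)%N /\ (yk.2 < size (nth [::] D yk.1))%N by case/andP: Iyk.
  have lastyk : yk.2 = (size (nth [::] D yk.1)).-1 by apply: (E_last Ht2 Iyk); rewrite ttyk.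
  have rdyk := rowD Hd ykD.
  have byk : bseg (Dseg D yk) = bseg (nth (0,0) s yk.1) by rewrite /Dseg lastyk (sd_last rdyk).
  have bxk : bseg (Dseg D xk) = b0 by rewrite /Dseg /= (sd_last rd0).
  have yks : (yk.1 < size s)%N by rewrite -szD.
  have e1 : eseg (nth (0,0) s yk.1) <= e0 := maxe _ yks.
  have e2 : eseg (nth (0,0) s yk.1) != e0.
    have yk1pos : (0 < yk.1)%N by case: (yk.1) yk1.
    apply/eqP=> h; have := samebeg _ yk1pos yks h.
    rewrite -byk; move: (congr1 bseg eqk); rewrite bnu bxk; clia.
  have := pw _ _ ch ys; rewrite /Rel => /andP[e3 R2].
  have eyd : eseg (Dseg D y) = e0 - 1 by move: ex0; rewrite eq0 enu; clia.
  have eyk : eseg (nth (0,0) s yk.1) = e0 - 1 by move: e1 e2 e3 ey_ eyd; clia.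
  have ey : eseg (nth (0,0) s y.1) = e0 - 1 by move: e1 e2 e3 ey_ eyd; clia.
  have Sk : nth (0,0) s yk.1 = nuinv d0.
    apply: seg_eq; last by rewrite eyk enuinv.
    by rewrite -byk bnuinv -/b0 -bxk eqk bnu addrK.
  have PSk : P (nth (0,0) s yk.1) = true.
    by rewrite HT ?mem_nth // Sk nuinvK mem_head Pd0.
  move: R2; rewrite eyk ey eqxx PSk /= => /andP[_].
  rewrite -by_ Sk bnuinv.
  have a1 := sd_lt rd0 (j:=0%N) (j':=k.-1) ltac:(by rewrite -ltnS prednK) kr.
  have a2 := sd_wf rd0 kr.
  have : bseg (Dseg D (0,0)%N) = bseg (Dseg D y) + 1 by rewrite eq0.
  move: a1 a2 bxk; rewrite /Dseg /=; clia.
- have k1' : k = 1%N by apply/eqP; rewrite eqn_leq k1 k0.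
  split=> //.
  have dx0 : Dseg D (0,0)%N = d0 by rewrite /Dseg /= (sd_single rd0 k1').
  have dy : Dseg D y = nuinv d0 by rewrite -dx0 eq0 nuK.
  have e1 := maxe _ ys.
  have e2 : eseg (nth (0,0) s y.1) != e0.
    apply/eqP=> h; have := samebeg _ y1pos ys h.
    rewrite -by_ dy bnuinv; clia.
  have ey : eseg (nth (0,0) s y.1) = e0 - 1 by move: e1 e2 ey_; rewrite dy enuinv; clia.
  have Sq : nth (0,0) s y.1 = nuinv d0.
    apply: seg_eq; last by rewrite ey enuinv.
    by rewrite -by_ dy.
  have y20 : y.2 = 0%N.
    case E2 : (y.2) => [//|j]; exfalso.
    have := sd_eup rdy (j:=y.2) ltac:(by rewrite E2) yr.
    move=> h; have : eseg (Dseg D y) = e0 - 1 by rewrite dy enuinv.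
    rewrite /Dseg; move: ey h; clia.
  have szq : size (nth [::] D y.1) = 1%N.
    by move: lasty yr; rewrite y20; clia.
  have ey0 : (y.1, 0%N) = y by rewrite -y20 -surjective_pairing.
  exists y.1; split => //.
  + by rewrite y1pos ys.
  + by rewrite ey0 tty.
Qed.

Lemma nth_rm (T : Type) (x0 : T) (l : seq T) h i : (h < size l)%N ->
  nth x0 (take h l ++ drop h.+1 l) i = nth x0 l (if (i < h)%N then i else i.+1).
Proof.
move=> hl; rewrite nth_cat size_take hl.
case: ifP => ih; first by rewrite nth_take.
rewrite nth_drop; congr nth; move/negbT: ih; rewrite -leqNgt => ih; lia.
Qed.

Lemma size_rm (T : Type) (l : seq T) h : (h < size l)%N ->
  size (take h l ++ drop h.+1 l) = (size l).-1.
Proof. move=> hl; rewrite size_cat size_take size_drop hl; lia. Qed.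

Lemma perm_rm (l : seq seg) h : (h < size l)%N ->
  perm_eq l (nth (0,0) l h :: (take h l ++ drop h.+1 l)).
Proof.
move=> hl; rewrite -{1}(cat_take_drop h l) (drop_nth (0,0) hl).
by rewrite -cat1s perm_catCA.
Qed.

Definition fi (h i : nat) : nat := (if (i < h)%N then i else i.+1).+1.
Definition gi (h i : nat) : nat := if (i <= h)%N then i.-1 else i.-2.

Lemma giK h i : gi h (fi h i) = i.
Proof. rewrite /fi /gi; case: (ltnP i h) => H /=; case: leqP => H2 //=; lia. Qed.

Lemma fiK h a : a <> 0%N -> a <> h.+1 -> fi h (gi h a) = a.
Proof.
rewrite /fi /gi => a0 ah; case: (leqP a h) => H; case: ltnP => H2; lia.
Qed.

Lemma fi_ne h i : fi h i <> 0%N /\ fi h i <> h.+1.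
Proof. rewrite /fi; case: (ltnP i h) => H; split; lia. Qed.

Lemma gi_lt h a b : a <> 0%N -> a <> h.+1 -> b <> 0%N -> b <> h.+1 ->
  (gi h a < gi h b)%N = (a < b)%N.
Proof.
rewrite /gi => a0 ah b0 bh; case: (leqP a h) => H; case: (leqP b h) => H2;
  apply/idP/idP; lia.
Qed.

Lemma gi_eq h a b : a <> 0%N -> a <> h.+1 -> b <> 0%N -> b <> h.+1 ->
  (gi h a == gi h b) = (a == b).
Proof.
rewrite /gi => a0 ah b0 bh; case: (leqP a h) => H; case: (leqP b h) => H2;
  apply/idP/idP => /eqP; lia.
Qed.

Lemma fi_lt h i n : (h < n)%N -> (fi h i < n.+1)%N = (i < n.-1)%N.
Proof. rewrite /fi => hn; case: (ltnP i h) => H; apply/idP/idP; lia. Qed.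


Lemma Pd0_false d0 s1 (P : pred seg) :
  (forall d, d \in d0 :: s1 -> P d = (nu d \in d0 :: s1) && ~~ P (nu d)) ->
  pairwise (Rel P) (d0 :: s1) -> P d0 = false.
Proof.
move=> HT; rewrite pairwise_cons => /andP[/allP a _].
rewrite HT ?mem_head // in_cons; case: eqP => [h|_] /=.
  by have := congr1 eseg h; rewrite enu; clia.
case nd : (nu d0 \in s1) => //=.
by have /andP[] := a _ nd; rewrite enu; clia.
Qed.

Lemma main_ind k : forall s, (size s < k)%N -> Psi s -> forall D, decomp s D -> relevant D ->
  trivial_decomp D /\ exists n, mset_ok n /\ perm_eq s (n ++ map nu n).
Proof.
elim: k => [//|k IH] s sk Ps D Hd [t [Ht1 Ht2 Ht3 Ht4]].
case: s sk Ps Hd => [|d0 s1] sk Ps Hd.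
  case: Hd => szD _; split; first by move=> i; rewrite szD.
  by exists [::].
have [k1 [q [/andP[q0 qs] Sq szq t0 tq]]] := first_row Ps Hd Ht1 Ht2 Ht3 Ht4.
set h := q.-1.
have qh : q = h.+1 by rewrite /h prednK.
have hs1 : (h < size s1)%N by move: qs; rewrite qh.
have szD : size D = size (d0 :: s1) by case: Hd.
case: D Hd Ht1 Ht2 Ht3 Ht4 k1 szq t0 tq szD => [|D0 D1]; first by [].
move=> Hd Ht1 Ht2 Ht3 Ht4 k1 szq t0 tq [szD1].
have hD1 : (h < size D1)%N by rewrite szD1.
set s' := take h s1 ++ drop h.+1 s1.
set D' := take h D1 ++ drop h.+1 D1.
have Sq' : nth (0,0) s1 h = nuinv d0 by move: Sq; rewrite qh.
case: Ps => us ws [P [HT Hpw]].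
have pe : perm_eq s1 (nuinv d0 :: s') by rewrite -Sq'; apply: perm_rm.
have pe2 : perm_eq (d0 :: s1) [:: d0, nuinv d0 & s'] by rewrite perm_cons.
have nth_s' : forall i, nth (0,0) s' i = nth (0,0) (d0 :: s1) (fi h i).
  by move=> i; rewrite nth_rm.
have nth_D' : forall i, nth [::] D' i = nth [::] (D0 :: D1) (fi h i).
  by move=> i; rewrite nth_rm.
have sz_s' : size s' = (size s1).-1 by rewrite size_rm.
have sz_D' : size D' = (size D1).-1 by rewrite size_rm.
have inI' : forall x, inI D' x = inI (D0 :: D1) (fi h x.1, x.2).
  move=> [i j]; rewrite /inI /= nth_D' sz_D' /=.
  by rewrite -[(size D1).+1]/(size D1).+1 fi_lt.
have Dseg' : forall x, Dseg D' x = Dseg (D0 :: D1) (fi h x.1, x.2).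
  by move=> [i j]; rewrite /Dseg /= nth_D'.
set DD := D0 :: D1 in Hd Ht1 Ht2 Ht3 Ht4 k1 szq t0 tq inI' Dseg' nth_D' *.
have key : forall X, inI DD X -> X.1 <> 0%N -> X.1 <> q ->
             (t X).1 <> 0%N /\ (t X).1 <> q.
  move=> X IX X0 Xq; have [It tt] := Ht1 _ IX.
  move: It; case E : (t X) => [a b] /= It.
  have [aD bA] : (a < size DD)%N /\ (b < size (nth [::] DD a))%N by case/andP: It.
  split=> ea; subst a.
    move: bA; rewrite k1 ltnS leqn0 => /eqP b0; subst b.
    by apply: Xq; rewrite -tt E t0.
  move: bA; rewrite szq ltnS leqn0 => /eqP b0; subst b.
  by apply: X0; rewrite -tt E tq.
set t' := fun x : nat * nat => (gi h (t (fi h x.1, x.2)).1, (t (fi h x.1, x.2)).2).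
have fi0 : forall i, fi h i <> 0%N /\ fi h i <> q by move=> i; rewrite qh; apply: fi_ne.
have back : forall x, inI D' x ->
   [/\ inI DD (t (fi h x.1, x.2)), (t (fi h x.1, x.2)).1 <> 0%N,
       (t (fi h x.1, x.2)).1 <> q &
       (fi h (t' x).1, (t' x).2) = t (fi h x.1, x.2)].
  move=> x Ix; rewrite inI' in Ix.
  have [It _] := Ht1 _ Ix.
  have [/= n0 nq] := key _ Ix (fi0 x.1).1 (fi0 x.1).2.
  split=> //; rewrite /t' /= fiK //; first by case: (t _).
  by rewrite -qh.
have rel' : relevant D'.
  exists t'; split.
  - move=> x Ix; have [It n0 nq e] := back _ Ix.
    split; first by rewrite inI' e.
    rewrite inI' in Ix; have [_ tt] := Ht1 _ Ix.
    change (t' (t' x)) with (gi h (t (fi h (t' x).1, (t' x).2)).1,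
                             (t (fi h (t' x).1, (t' x).2)).2).
    by rewrite e tt /= giK; case: (x).
  - move=> i j Ix.
    have Ix0 : inI D' (i, j) by move: Ix; rewrite /inI /= => /andP[-> /ltnW].
    have [_ a0 aq _] := back _ Ix; have [_ b0 bq _] := back _ Ix0.
    rewrite /t' /= gi_lt ?qh' //; try (rewrite -?qh; assumption).
    apply: Ht2; by rewrite inI' in Ix.
  - move=> x Ix e; have [It n0 nq e'] := back _ Ix.
    rewrite inI' in Ix; apply: (Ht3 _ Ix); by rewrite -e' e.
  - move=> x Ix lx; have [It n0 nq e'] := back _ Ix.
    rewrite Dseg' (Dseg' (t' x)) e'.
    rewrite inI' in Ix; apply: Ht4 => //.
    move: lx; rewrite /lexlt /t' /=.
    have [f0 fq] := fi0 x.1.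
    have ha : fi h x.1 <> h.+1 by rewrite -qh.
    have hb : (t (fi h x.1, x.2)).1 <> h.+1 by rewrite -qh.
    have L2 := gi_eq f0 ha n0 hb; rewrite giK in L2.
    have L1 := gi_lt f0 ha n0 hb; rewrite giK in L1.
    by rewrite L1 L2.
have dec' : decomp s' D'.
  split; first by rewrite sz_s' sz_D' szD1.
  move=> i iS; rewrite nth_s' nth_D'; apply: (rowD Hd).
  by rewrite /DD /= fi_lt // szD1 -sz_s'.
have nd : uniq [:: d0, nuinv d0 & s'] by rewrite -(perm_uniq pe2).
move: nd => /= /andP[nd0 /andP[nq us']].
have ws' : all wf_seg [:: d0, nuinv d0 & s'] by rewrite -(perm_all _ pe2).
have memS : forall d, d \in s' -> d \in d0 :: s1.
  by move=> d ds; rewrite (perm_mem pe2) !in_cons ds !orbT.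
have Pd0 := Pd0_false HT Hpw.
have PSq : P (nuinv d0) = true.
  rewrite HT; last by rewrite (perm_mem pe2) !in_cons eqxx orbT.
  by rewrite nuinvK mem_head Pd0.
set P' := fun d => P d && (nu d != nuinv d0).
have PP : forall d, d \in s' -> P' d = P d.
  move=> d ds; rewrite /P'; case: eqP => [e|_]; rewrite ?andbT //.
  by rewrite andbF (HT d (memS _ ds)) e PSq andbF.
have Psi' : Psi s'.
  split => //; first by move: ws' => /= /and3P[].
  exists P'; split.
    move=> d ds; rewrite PP // (HT d (memS _ ds)).
    case nds : (nu d \in s').
      by rewrite PP // memS.
    rewrite /=; case nds2 : (nu d \in d0 :: s1) => //=.
    move: nds2; rewrite (perm_mem pe2) !in_cons nds orbF => /orP[/eqP e|/eqP e].
      by move: nq; rewrite -e nuK ds.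
    by rewrite e PSq.
  have -> : pairwise (Rel P') s' = pairwise (Rel P) s'.
    by apply: my_eq_in_pairwise => a b ha hb; rewrite /Rel (PP _ ha) (PP _ hb).
  move: Hpw; rewrite pairwise_cons => /andP[_].
  rewrite -{1}(cat_take_drop h s1) (drop_nth (0,0) hs1).
  rewrite !pairwise_cat allrel_consr pairwise_cons.
  by move=> /and3P[/andP[_ ->] -> /andP[_ ->]].
have sz' : (size s' < k)%N by rewrite sz_s'; move: sk => /=; clia.
have [triv' [n' [wn' pn']]] := IH s' sz' Psi' D' dec' rel'.
split.
  move=> i iD.
  case: (eqVneq i 0%N) => [->|i0]; first exact: k1.
  case: (eqVneq i q) => [->|iq]; first exact: szq.
  have i0' : i <> 0%N by apply/eqP.
  have iq' : i <> h.+1 by rewrite -qh; apply/eqP.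
  rewrite -(fiK i0' iq') -nth_D'; apply: triv'.
  by rewrite sz_D' -(fi_lt (gi h i) hD1) fiK.
exists (nuinv d0 :: n'); split.
  move: wn'; rewrite /mset_ok /= => ->; rewrite andbT /wf_seg bnuinv enuinv.
  move: ws => /= /andP[w0 _]; move: w0; rewrite /wf_seg; clia.
apply: (perm_trans pe2); apply/permP => a.
have := permP pn' a; rewrite /= !count_cat /= nuinvK; clia.
Qed.

Unset Implicit Arguments.
Local Close Scope ring_scope.

Theorem mainTheorem10 (m : seq seg) :
  mset_ok m -> uniq m ->
  (forall D, decomp (canon m) D -> ~ trivial_decomp D -> ~ relevant D) /\
  (distinguished m -> speh_type m).
Proof.
move=> wm um; have Ps := canon_Psi wm um.
have H := @main_ind (size (canon m)).+1 (canon m) (ltnSn _) Ps.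
split.
  move=> D Hd nt rel; apply: nt; exact: (H D Hd rel).1.
move=> dist.
have std : standard (canon m).
  move=> i j /andP[ij js].
  case: Ps => _ _ [P [_ Hpw]].
  have := (pairwiseP (0%R,0%R) Hpw) i j (ltn_trans ij js) js ij.
  rewrite /Rel /prec => /andP[le _].
  apply/negP => /and3P[_ lt _]; move: le lt; clia.
have [D [Hd rel]] := dist (canon m) (canon_perm um) std.
have [_ [n [wn pn]]] := H D Hd rel.
exists n; split => //.
have pc := canon_perm um; rewrite perm_sym in pc; exact: perm_trans pc pn.
Qed.
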